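(* Let $G=(V,E)$ be a fixed finite simple graph, $\Gamma$ a nonempty family of walks on $G$, and $1<p<\infty$. Define $F(\sigma):=\mathrm{Mod}_p(\Gamma;\sigma)$ for weights $\sigma:E\to(0,\infty)$, and let $\rho^*_\sigma$ be the unique extremal density for $\mathrm{Mod}_p(\Gamma;\sigma)$. Then for every $\sigma$ and every direction $\eta:E\to\mathbb{R}$, $$\lim_{h\to0^+}\frac{F(\sigma+h\eta)-F(\sigma)}{h}=\sum_{e\in E}\eta(e)\rho^*_\sigma(e)^p;$$ in particular $\dfrac{\partial F(\sigma)}{\partial\sigma(e)}=\rho^*_\sigma(e)^p$ for every $e\in E$.
   Context: $G=(V,E)$ is a finite simple graph (directed or undirected). A walk is a string of edges $e_1\dots e_r$, $r\ge1$, $e_i=(v_i,v_{i+1})\in E$, with $\rho$-length $\ell_\rho(\gamma)=\sum_i\rho(e_i)$ for $\rho:E\to\mathbb{R}$. $A(\Gamma)=\{\rho:E\to\mathbb{R}:\rho\ge0,\ \ell_\rho(\gamma)\ge1\ \forall\gamma\in\Gamma\}$. For weights $\sigma:E\to(0,\infty)$, $\mathcal{E}_p(\rho;\sigma)=\sum_e\sigma(e)|\rho(e)|^p$ and $\mathrm{Mod}_p(\Gamma;\sigma)=\inf_{\rho\in A(\Gamma)}\mathcal{E}_p(\rho;\sigma)$; the extremal density is the unique minimizer in $A(\Gamma)$ (for $1<p<\infty$). *)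

(* Defs.v *)
From mathcomp Require Import ssreflect ssrbool ssrfun eqtype ssrnat seq choice fintype.
From Stdlib Require Import Reals ClassicalEpsilon.
Set Implicit Arguments. Unset Strict Implicit.
Open Scope R_scope.

(* A finite graph with vertex set V and edge set E (both finite).
   [trav e u v] means: edge e may be traversed from u to v, i.e. e = (u,v).
   For a directed simple graph take E = {(u,v) | adj u v}, trav e u v := (e == (u,v));
   for an undirected one E = {{u,v} | adj u v}, trav e u v := adj u v && (e == {u,v}). *)

Fixpoint walk_from (V E : Type) (trav : E -> V -> V -> bool) (u : V) (s : seq E) : Prop :=
  match s with
  | [::] => True
  | e :: s' => exists v, trav e u v /\ walk_from trav v s'
  end.

Definition is_walk (V E : Type) (trav : E -> V -> V -> bool) (s : seq E) : Prop :=
  s <> [::] /\ exists u : V, walk_from trav u s.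

Definition sumE (E : finType) (f : E -> R) : R :=
  foldr (fun e acc => f e + acc) 0 (enum E).

Definition rho_len (E : Type) (rho : E -> R) (g : seq E) : R :=
  foldr (fun e acc => rho e + acc) 0 g.

Definition admissible (E : Type) (Gamma : seq E -> Prop) (rho : E -> R) : Prop :=
  (forall e, 0 <= rho e) /\ (forall g, Gamma g -> 1 <= rho_len rho g).

Definition rpow (x p : R) : R := if Rle_dec x 0 then 0 else Rpower x p.

Definition energy (E : finType) (p : R) (sigma rho : E -> R) : R :=
  sumE (fun e => sigma e * rpow (Rabs (rho e)) p).

Definition is_glb (S : R -> Prop) (m : R) : Prop :=
  (forall x, S x -> m <= x) /\ (forall y, (forall x, S x -> y <= x) -> y <= m).

Definition Mod (E : finType) (Gamma : seq E -> Prop) (p : R) (sigma : E -> R) : R :=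
  epsilon (inhabits 0)
    (is_glb (fun x => exists rho, admissible Gamma rho /\ x = energy p sigma rho)).

(* the extremal density: a minimizer in A(Gamma) (unique for 1 < p < oo) *)
Definition extremal (E : finType) (Gamma : seq E -> Prop) (p : R) (sigma : E -> R) : E -> R :=
  epsilon (inhabits (fun _ => 0))
    (fun rho => admissible Gamma rho /\ energy p sigma rho = Mod Gamma p sigma).

(* Main.v *)
Require Import Defs.
From mathcomp Require Import ssreflect ssrbool ssrfun eqtype ssrnat seq choice fintype.
From Stdlib Require Import Reals Lra Lia ClassicalEpsilon FunctionalExtensionality Classical.
From Coquelicot Require Derive.
Open Scope R_scope.

Lemma rpow_ge0 x p : 0 <= rpow x p.
Proof. unfold rpow; case: (Rle_dec x 0) => ? /= ; [lra| unfold Rpower; left; apply exp_pos]. Qed.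

Lemma rpow_pos x p : 0 < x -> rpow x p = Rpower x p.
Proof. intro H; unfold rpow; case: (Rle_dec x 0) => ? /= ; [lra|reflexivity]. Qed.

Lemma rpow_le0 x p : x <= 0 -> rpow x p = 0.
Proof. intro H; unfold rpow; case: (Rle_dec x 0) => ? /= ; [reflexivity|lra]. Qed.

Lemma rpow_small x p : 1 <= p -> 0 <= x <= 1 -> rpow x p <= x.
Proof.
  intros Hp [H0 H1]. destruct (Req_dec x 0) as [->|Hx].
  - rewrite rpow_le0; lra.
  - rewrite rpow_pos; [|lra]. unfold Rpower.
    rewrite <- (exp_ln x) at 2 by lra.
    assert (ln x <= 0).
    { destruct (Req_dec x 1) as [->|H2]; [rewrite ln_1; lra|].
      left; rewrite <- ln_1. apply ln_increasing; lra. }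
    destruct (Req_dec (p * ln x) (ln x)) as [->|H3]; [lra|].
    left; apply exp_increasing. nra.
Qed.

Lemma rpow_big x p : 1 <= p -> 1 <= x -> x <= rpow x p.
Proof.
  intros Hp Hx. rewrite rpow_pos; [|lra].
  rewrite <- (Rpower_1 x) at 1 by lra. apply Rle_Rpower; lra.
Qed.

Lemma rpow_lt x y p : 0 < p -> 0 <= x < y -> rpow x p < rpow y p.
Proof.
  intros Hp [H0 H1]. rewrite (rpow_pos y) ; [|lra].
  destruct (Req_dec x 0) as [->|Hx].
  - rewrite rpow_le0; [|lra]. unfold Rpower; apply exp_pos.
  - rewrite rpow_pos; [|lra]. apply Rlt_Rpower_l; lra.
Qed.

Lemma rpow_le x y p : 0 < p -> 0 <= x <= y -> rpow x p <= rpow y p.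
Proof.
  intros Hp [H0 H1]. destruct (Req_dec x y) as [->|Hxy]; [lra|].
  left; apply rpow_lt; lra.
Qed.

Lemma rpow_cont p : 1 <= p -> forall x, continuity_pt (fun x => rpow x p) x.
Proof.
  intros Hp x.
  destruct (Rtotal_order x 0) as [Hx|[Hx|Hx]].
  - apply continuity_pt_locally_ext with (f := fun _ => 0) (a := - x); [lra| |].
    + intros y Hy. unfold Rdist in Hy. rewrite rpow_le0; [reflexivity|].
      apply Rabs_def2 in Hy. lra.
    + apply continuity_pt_const. intros a b; reflexivity.
  - subst x. intros eps Heps. exists (Rmin 1 eps). split.
    { apply Rmin_pos; lra. }
    intros y [_ Hy]. simpl in *. unfold R_dist in *.
    rewrite (rpow_le0 0) ; [|lra]. rewrite Rminus_0_r in Hy |- *.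
    assert (Hm1 := Rmin_l 1 eps). assert (Hm2 := Rmin_r 1 eps).
    apply Rabs_def2 in Hy.
    rewrite Rminus_0_r Rabs_pos_eq; [|apply rpow_ge0].
    destruct (Rle_dec y 0).
    + rewrite rpow_le0; lra.
    + assert (rpow y p <= y) by (apply rpow_small; lra). lra.
  - apply continuity_pt_locally_ext with (f := fun y => Rpower y p) (a := x); [lra| |].
    + intros y Hy. unfold Rdist in Hy. apply Rabs_def2 in Hy.
      rewrite rpow_pos; [reflexivity|lra].
    + apply derivable_continuous_pt. exists (p * Rpower x (p - 1)).
      apply derivable_pt_lim_power; lra.
Qed.


Definition Hf p b t := rpow t p - 2 * rpow ((t+b)/2) p.
Definition dHf p b t := p * rpow t (p-1) - p * rpow ((t+b)/2) (p-1).

Lemma Hf_deriv p b t : 1 < p -> 0 <= b -> b < t -> derivable_pt_lim (Hf p b) t (dHf p b t).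
Proof.
  intros Hp Hb Ht.
  assert (D1 := derivable_pt_lim_power t p ltac:(lra)).
  assert (Dl : derivable_pt_lim (fun y => (y + b)/2) t (1/2)).
  { intros eps He. exists (mkposreal 1 Rlt_0_1). intros h Hh _.
    replace (((t + h + b) / 2 - (t + b) / 2) / h - 1 / 2) with 0 by (field; exact Hh).
    rewrite Rabs_R0; lra. }
  assert (D2 := derivable_pt_lim_power ((t+b)/2) p ltac:(lra)).
  assert (D3 := derivable_pt_lim_comp _ _ _ _ _ Dl D2).
  assert (D4 := derivable_pt_lim_scal _ 2 _ _ D3).
  assert (D5 := derivable_pt_lim_minus _ _ _ _ _ D1 D4).
  unfold dHf. rewrite !rpow_pos; try lra.
  replace (p * Rpower t (p - 1) - p * Rpower ((t + b) / 2) (p - 1))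
    with (p * Rpower t (p - 1) - 2 * (p * Rpower ((t + b) / 2) (p - 1) * (1 / 2))) by field.
  intros eps He. destruct (D5 eps He) as [d Hd].
  exists (mkposreal (Rmin d (t - b)) ltac:(apply Rmin_pos; [apply cond_pos| lra])).
  intros h Hh Hh2. simpl in Hh2.
  assert (Hm1 := Rmin_l d (t-b)). assert (Hm2 := Rmin_r d (t-b)).
  specialize (Hd h Hh ltac:(lra)).
  apply Rabs_def2 in Hh2.
  unfold Hf. rewrite !rpow_pos; try lra.
  unfold minus_fct, mult_real_fct, comp in Hd.
  replace ((t + h + b)/2) with ((t+b)/2 + h/2) in Hd |- * by field.
  exact Hd.
Qed.

Lemma Hf_cont p b t : 1 <= p -> continuity_pt (Hf p b) t.
Proof.
  intros Hp. unfold Hf.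
  apply (continuity_pt_minus (fun t => rpow t p) (fun t => 2 * rpow ((t + b) / 2) p)).
  - apply rpow_cont; lra.
  - apply (continuity_pt_scal (fun t => rpow ((t + b) / 2) p)).
    apply (continuity_pt_comp (fun t => (t+b)/2) (fun x => rpow x p)).
    + apply (continuity_pt_mult (fun t => t + b) (fun _ => /2)).
      * apply (continuity_pt_plus (fun t => t) (fun _ => b)).
        apply derivable_continuous_pt, derivable_pt_id.
        apply continuity_pt_const; intros ??; reflexivity.
      * apply continuity_pt_const; intros ??; reflexivity.
    + apply rpow_cont; lra.
Qed.

Module MV.
Lemma Hf_mvt p b t1 t2 : 1 < p -> 0 <= b -> b <= t1 < t2 ->
  exists c, t1 <= c <= t2 /\ Hf p b t2 - Hf p b t1 = dHf p b c * (t2 - t1).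
Proof.
  intros Hp Hb Ht.
  destruct (Derive.MVT_gen (Hf p b) t1 t2 (dHf p b)) as [c [Hc Heq]].
  - intros x Hx. rewrite Rmin_left in Hx; [|lra]. rewrite Rmax_right in Hx; [|lra].
    apply Derive.is_derive_Reals. apply Hf_deriv; lra.
  - intros x _. apply Hf_cont; lra.
  - rewrite Rmin_left in Hc; [|lra]. rewrite Rmax_right in Hc; [|lra].
    exists c; split; assumption.
Qed.
End MV.

Lemma dHf_nonneg p b c : 1 < p -> 0 <= b -> b <= c -> 0 <= dHf p b c.
Proof.
  intros Hp Hb Hc. unfold dHf.
  assert (rpow ((c + b) / 2) (p - 1) <= rpow c (p-1)) by (apply rpow_le; lra).
  nra.
Qed.

Lemma dHf_pos p b c : 1 < p -> 0 <= b -> b < c -> 0 < dHf p b c.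
Proof.
  intros Hp Hb Hc. unfold dHf.
  assert (rpow ((c + b) / 2) (p - 1) < rpow c (p-1)) by (apply rpow_lt; lra).
  nra.
Qed.

Lemma Hf_mono p b t1 t2 : 1 < p -> 0 <= b -> b <= t1 <= t2 -> Hf p b t1 <= Hf p b t2.
Proof.
  intros Hp Hb Ht. destruct (Req_dec t1 t2) as [->|Hne]; [lra|].
  destruct (MV.Hf_mvt p b t1 t2) as [c [Hc Heq]]; try lra.
  assert (0 <= dHf p b c) by (apply dHf_nonneg; lra). nra.
Qed.

Lemma Hf_strict p b t1 t2 : 1 < p -> 0 <= b -> b < t1 < t2 -> Hf p b t1 < Hf p b t2.
Proof.
  intros Hp Hb Ht.
  destruct (MV.Hf_mvt p b t1 t2) as [c [Hc Heq]]; try lra.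
  assert (0 < dHf p b c) by (apply dHf_pos; lra). nra.
Qed.

Definition gap p a b := (rpow a p + rpow b p)/2 - rpow ((a+b)/2) p.

Lemma gap_Hf p a b : gap p a b = (Hf p b a - Hf p b b) / 2.
Proof. unfold gap, Hf. replace ((b+b)/2) with b by field. field. Qed.

Lemma gap_sym p a b : gap p a b = gap p b a.
Proof. unfold gap. replace ((b+a)/2) with ((a+b)/2) by field. lra. Qed.

Lemma gap_mono p a a' b : 1 < p -> 0 <= b -> b <= a' <= a -> gap p a' b <= gap p a b.
Proof. intros. rewrite !gap_Hf. assert (Hf p b a' <= Hf p b a) by (apply Hf_mono; lra). lra. Qed.

Lemma gap_pos p a b : 1 < p -> 0 <= b -> b < a -> 0 < gap p a b.
Proof.
  intros. rewrite gap_Hf.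
  assert (Hf p b b <= Hf p b ((a+b)/2)) by (apply Hf_mono; lra).
  assert (Hf p b ((a+b)/2) < Hf p b a) by (apply Hf_strict; lra). lra.
Qed.

Lemma gap_ge0 p a b : 1 < p -> 0 <= a -> 0 <= b -> 0 <= gap p a b.
Proof.
  intros H1 H2 H3. destruct (Rtotal_order a b) as [H|[H|H]].
  - rewrite gap_sym; left; apply gap_pos; lra.
  - subst; unfold gap; replace ((b+b)/2) with b by field; lra.
  - left; apply gap_pos; lra.
Qed.

Lemma gap_cont p eps b : 1 <= p -> continuity_pt (fun b => gap p (b + eps) b) b.
Proof.
  intros Hp. unfold gap.
  assert (Hc : forall f, continuity_pt f b -> continuity_pt (fun x => rpow (f x) p) b).
  { intros f Hf. apply (continuity_pt_comp f (fun x => rpow x p)); [exact Hf| apply rpow_cont; lra]. }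
  assert (Hid : continuity_pt (fun x => x) b) by (apply derivable_continuous_pt, derivable_pt_id).
  assert (Hk : forall k, continuity_pt (fun _ => k) b) by (intros k; apply continuity_pt_const; intros ??; reflexivity).
  apply (continuity_pt_minus (fun x => (rpow (x + eps) p + rpow x p) / 2) (fun x => rpow ((x + eps + x)/2) p)).
  - apply (continuity_pt_mult (fun x => rpow (x + eps) p + rpow x p) (fun _ => /2)); [|apply Hk].
    apply (continuity_pt_plus (fun x => rpow (x + eps) p) (fun x => rpow x p)).
    + apply Hc. apply (continuity_pt_plus (fun x => x) (fun _ => eps)); auto.
    + apply Hc; auto.
  - apply Hc. apply (continuity_pt_mult (fun x => x + eps + x) (fun _ => /2)); [|apply Hk].
    apply (continuity_pt_plus (fun x => x + eps) (fun x => x)); auto.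
    apply (continuity_pt_plus (fun x => x) (fun _ => eps)); auto.
Qed.

Lemma unif_conv p K eps : 1 < p -> 0 <= K -> 0 < eps ->
  exists d, 0 < d /\ forall a b, 0 <= a <= K -> 0 <= b <= K -> eps <= Rabs (a - b) -> d <= gap p a b.
Proof.
  intros Hp HK He.
  destruct (continuity_ab_min (fun b => gap p (b + eps) b) 0 K HK) as [m [Hm Hm0]].
  { intros c _. apply gap_cont; lra. }
  exists (gap p (m + eps) m). split.
  { apply gap_pos; lra. }
  intros a b Ha Hb Hab.
  destruct (Rle_dec b a) as [Hba|Hba].
  - rewrite Rabs_pos_eq in Hab; [|lra].
    apply Rle_trans with (gap p (b + eps) b); [apply Hm; lra|].
    apply gap_mono; lra.
  - rewrite Rabs_minus_sym Rabs_pos_eq in Hab; [|lra]. rewrite (gap_sym p a b).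
    apply Rle_trans with (gap p (a + eps) a); [apply Hm; lra|].
    apply gap_mono; lra.
Qed.

Set Implicit Arguments. Unset Strict Implicit.

Definition lsum (T : Type) (s : seq T) (f : T -> R) : R := foldr (fun e acc => f e + acc) 0 s.

Lemma lsum_ext T (s : seq T) f g : (forall e, f e = g e) -> lsum s f = lsum s g.
Proof. intro H; elim: s => [|x s IH] //=; rewrite IH H //. Qed.

Lemma lsum_plus T (s : seq T) f g : lsum s (fun e => f e + g e) = lsum s f + lsum s g.
Proof. elim: s => [|x s IH] /=; [lra|rewrite IH; lra]. Qed.

Lemma lsum_scal T (s : seq T) c f : lsum s (fun e => c * f e) = c * lsum s f.
Proof. elim: s => [|x s IH] /=; [lra|rewrite IH; lra]. Qed.

Lemma lsum_le T (s : seq T) f g : (forall e, f e <= g e) -> lsum s f <= lsum s g.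
Proof. intro H; elim: s => [|x s IH] /=; [lra|specialize (H x); lra]. Qed.

Lemma lsum_nonneg T (s : seq T) f : (forall e, 0 <= f e) -> 0 <= lsum s f.
Proof. intro H; elim: s => [|x s IH] /=; [lra|specialize (H x); lra]. Qed.

Lemma lsum_term (T : eqType) (s : seq T) f e0 : (forall e, 0 <= f e) -> e0 \in s -> f e0 <= lsum s f.
Proof.
  intro H; elim: s => [|x s IH] //=. rewrite in_cons => /orP [/eqP ->|Hin].
  - assert (0 <= lsum s f) by (apply lsum_nonneg; auto). lra.
  - specialize (IH Hin). specialize (H x). lra.
Qed.

Lemma lsum_abs T (s : seq T) f : Rabs (lsum s f) <= lsum s (fun e => Rabs (f e)).
Proof.
  elim: s => [|x s IH] /=; [rewrite Rabs_R0; lra|].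
  eapply Rle_trans; [apply Rabs_triang|lra].
Qed.

Lemma lsum_cv T (s : seq T) (u : nat -> T -> R) (l : T -> R) :
  (forall e, Un_cv (fun n => u n e) (l e)) -> Un_cv (fun n => lsum s (u n)) (lsum s l).
Proof.
  intro H; elim: s => [|x s IH] /=.
  - intros eps He; exists 0%nat; intros n _; rewrite /R_dist Rminus_0_r Rabs_R0; lra.
  - apply (CV_plus (fun n => u n x) (fun n => lsum s (u n))); auto.
Qed.

Lemma lsum_ind (T : eqType) (s : seq T) e0 f : uniq s ->
  lsum s (fun e => (if e == e0 then 1 else 0) * f e) = if e0 \in s then f e0 else 0.
Proof.
  elim: s => [|x s IH] //= /andP [Hx Hu]. rewrite (IH Hu) in_cons.
  case: (eqVneq x e0) => [Hxe|Hne] /=.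
  - rewrite Hxe in Hx. rewrite Hxe (negbTE Hx) /=. lra.
  - lra.
Qed.

Lemma fin_min T (s : seq T) (P : T -> R -> Prop) :
  (forall e d d', 0 < d' <= d -> P e d -> P e d') ->
  (forall e, exists d, 0 < d /\ P e d) ->
  exists d, 0 < d /\ forall e, List.In e s -> P e d.
Proof.
  intros Hmon Hex. elim: s => [|x s [d [Hd IH]]].
  - exists 1; split; [lra|intros e []].
  - destruct (Hex x) as [dx [Hdx Px]].
    exists (Rmin d dx); split; [apply Rmin_pos; lra|].
    intros e [<-|Hin].
    + apply Hmon with dx; auto. split; [apply Rmin_pos; lra| apply Rmin_r].
    + apply Hmon with d; auto. split; [apply Rmin_pos; lra| apply Rmin_l].
Qed.

Lemma cv_ge (u : nat -> R) l a : Un_cv u l -> (forall n, a <= u n) -> a <= l.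
Proof.
  intros Hu Ha. apply (@Rle_cv_lim (fun _ => a) u); auto.
  intros eps He; exists 0%nat; intros n _; rewrite /R_dist Rminus_eq_0 Rabs_R0; lra.
Qed.

Lemma in_In (T : eqType) (s : seq T) x : x \in s -> List.In x s.
Proof.
  elim: s => [|y s IH] //=. rewrite in_cons => /orP [/eqP ->|H]; [left; reflexivity|right; auto].
Qed.

Lemma lsum_minus T (s : seq T) f g : lsum s (fun e => f e - g e) = lsum s f - lsum s g.
Proof. elim: s => [|x s IH] /=; [lra|rewrite IH; lra]. Qed.


Lemma energyE (E : finType) p (t r : E -> R) :
  energy p t r = lsum (enum E) (fun e => t e * rpow (Rabs (r e)) p).
Proof. reflexivity. Qed.

Lemma rho_lenE (E : Type) (r : E -> R) g : rho_len r g = lsum g r.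
Proof. reflexivity. Qed.

Lemma energy_ge0 (E : finType) p (t r : E -> R) : (forall e, 0 <= t e) -> 0 <= energy p t r.
Proof.
  intro H. rewrite energyE. apply lsum_nonneg => e.
  apply Rmult_le_pos; [apply H|apply rpow_ge0].
Qed.

Lemma adm_one (E : Type) (Gamma : seq E -> Prop) :
  (forall g, Gamma g -> g <> [::]) -> admissible Gamma (fun _ => 1).
Proof.
  intro Hg. split; [intros; lra|]. intros g Hgg. specialize (Hg g Hgg).
  destruct g as [|x s]; [congruence|]. rewrite rho_lenE /=.
  assert (0 <= lsum s (fun _ => 1)) by (apply lsum_nonneg; intros; lra). lra.
Qed.

Definition Sset (E : finType) (Gamma : seq E -> Prop) p (t : E -> R) :=
  fun x => exists rho, admissible Gamma rho /\ x = energy p t rho.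

Lemma Mod_glb (E : finType) (Gamma : seq E -> Prop) p (t : E -> R) :
  (forall g, Gamma g -> g <> [::]) -> (forall e, 0 <= t e) ->
  is_glb (Sset Gamma p t) (Mod Gamma p t).
Proof.
  intros Hg Ht. unfold Mod. apply epsilon_spec.
  destruct (completeness (fun x => Sset Gamma p t (- x))) as [m [Hub Hl]].
  - exists 0. intros x [r [_ Hx]]. assert (0 <= energy p t r) by (apply energy_ge0; auto). lra.
  - exists (- energy p t (fun _ => 1)). exists (fun _ => 1). split; [apply adm_one; auto|lra].
  - exists (- m). split.
    + intros x Hx. assert (x <= - - x) by lra.
      assert (- x <= m). { apply Hub. rewrite Ropp_involutive. exact Hx. } lra.
    + intros y Hy. assert (m <= - y). { apply Hl. intros x Hx. specialize (Hy _ Hx). lra. } lra.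
Qed.

Lemma glb_approx (S : R -> Prop) m th : is_glb S m -> 0 < th -> exists x, S x /\ x <= m + th.
Proof.
  intros [Hlb Hgr] Hth. apply NNPP. intro Hn.
  assert (m + th <= m); [|lra].
  apply Hgr. intros x Hx. apply Rnot_lt_le. intro Hlt. apply Hn. exists x; split; [auto|lra].
Qed.

Lemma glb_ge0 (E : finType) (Gamma : seq E -> Prop) p (t : E -> R) m :
  (forall e, 0 <= t e) -> is_glb (Sset Gamma p t) m -> 0 <= m.
Proof.
  intros Ht [_ Hgr]. apply Hgr. intros x [r [_ ->]]. apply energy_ge0; auto.
Qed.

Lemma energy_lin (E : finType) p (t eta r : E -> R) h :
  energy p (fun e => t e + h * eta e) r = energy p t r + h * lsum (enum E) (fun e => eta e * rpow (Rabs (r e)) p).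
Proof.
  rewrite !energyE -lsum_scal -lsum_plus. apply lsum_ext => e. ring.
Qed.

Lemma adm_mid (E : Type) (Gamma : seq E -> Prop) r1 r2 :
  admissible Gamma r1 -> admissible Gamma r2 -> admissible Gamma (fun e => (r1 e + r2 e)/2).
Proof.
  intros [H1 G1] [H2 G2]. split.
  - intro e. specialize (H1 e); specialize (H2 e); lra.
  - intros g Hg. specialize (G1 g Hg); specialize (G2 g Hg).
    rewrite !rho_lenE in G1 G2 |- *.
    rewrite (@lsum_ext _ _ _ (fun e => / 2 * (r1 e + r2 e))); [|intros; field].
    rewrite lsum_scal lsum_plus. lra.
Qed.

Lemma gap_sum (E : finType) (Gamma : seq E -> Prop) p (t r1 r2 : E -> R) :
  admissible Gamma r1 -> admissible Gamma r2 ->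
  energy p t r1 + energy p t r2 - 2 * energy p t (fun e => (r1 e + r2 e)/2)
  = 2 * lsum (enum E) (fun e => t e * gap p (r1 e) (r2 e)).
Proof.
  intros [H1 _] [H2 _]. rewrite !energyE.
  assert (L : forall (s : seq E) (a b c : E -> R), lsum s (fun e => a e + b e - 2 * c e) = lsum s a + lsum s b - 2 * lsum s c).
  { intros s a b c. elim: s => [|x s IH] /=; [lra|rewrite IH; lra]. }
  rewrite -L -lsum_scal. apply lsum_ext => e.
  specialize (H1 e); specialize (H2 e).
  rewrite !Rabs_pos_eq; try lra. unfold gap. field.
Qed.

Lemma mid_term (E : finType) (Gamma : seq E -> Prop) p (t r1 r2 : E -> R) m e0 :
  1 < p -> (forall e, 0 <= t e) -> is_glb (Sset Gamma p t) m ->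
  admissible Gamma r1 -> admissible Gamma r2 ->
  t e0 * gap p (r1 e0) (r2 e0) <= (energy p t r1 + energy p t r2)/2 - m.
Proof.
  intros Hp Ht [Hlb _] A1 A2.
  assert (Hm : m <= energy p t (fun e => (r1 e + r2 e)/2)).
  { apply Hlb. exists (fun e => (r1 e + r2 e)/2); split; [apply adm_mid; auto|reflexivity]. }
  assert (Hs := gap_sum p t A1 A2).
  assert (t e0 * gap p (r1 e0) (r2 e0) <= lsum (enum E) (fun e => t e * gap p (r1 e) (r2 e))).
  { apply (@lsum_term _ (enum E) (fun e => t e * gap p (r1 e) (r2 e)) e0); [|by rewrite mem_enum].
    intro e. destruct A1 as [P1 _], A2 as [P2 _].
    apply Rmult_le_pos; [apply Ht|apply gap_ge0; auto]. }
  lra.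
Qed.

Lemma bound_adm (E : finType) (Gamma : seq E -> Prop) p (t r : E -> R) C e0 :
  1 <= p -> admissible Gamma r -> (forall e, 0 <= t e) -> 0 < t e0 -> energy p t r <= C ->
  r e0 <= 1 + C / t e0.
Proof.
  intros Hp [Hr _] Ht Ht0 HC.
  assert (H1 : t e0 * rpow (Rabs (r e0)) p <= energy p t r).
  { rewrite energyE. apply (@lsum_term _ (enum E) (fun e => t e * rpow (Rabs (r e)) p) e0); [|by rewrite mem_enum].
    intro e; apply Rmult_le_pos; [apply Ht|apply rpow_ge0]. }
  rewrite Rabs_pos_eq in H1; [|apply Hr].
  assert (H2 : rpow (r e0) p <= C / t e0).
  { apply (Rmult_le_reg_l (t e0)); [lra|]. field_simplify; [lra|lra]. }
  assert (H3 : 0 <= rpow (r e0) p) by apply rpow_ge0.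
  destruct (Rle_dec (r e0) 1); [lra|].
  assert (r e0 <= rpow (r e0) p) by (apply rpow_big; lra). lra.
Qed.

Lemma close_pair (E : finType) (Gamma : seq E -> Prop) p (t : E -> R) m e0 eps :
  1 < p -> (forall e, 0 < t e) -> is_glb (Sset Gamma p t) m -> 0 < eps ->
  exists d, 0 < d /\ forall r1 r2, admissible Gamma r1 -> admissible Gamma r2 ->
    energy p t r1 <= m + 1 -> energy p t r2 <= m + 1 ->
    (energy p t r1 + energy p t r2)/2 - m < d -> Rabs (r1 e0 - r2 e0) < eps.
Proof.
  intros Hp Ht Hglb He.
  assert (Ht' : forall e, 0 <= t e) by (intro e; left; apply Ht).
  assert (Hm := glb_ge0 Ht' Hglb).
  assert (Ht0 := Ht e0).
  assert (HK : 0 <= 1 + (m + 1) / t e0).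
  { assert (0 <= (m+1)/t e0) by (apply Rmult_le_pos; [lra| left; apply Rinv_0_lt_compat; lra]). lra. }
  destruct (@unif_conv p (1 + (m+1)/t e0) eps Hp HK He) as [dl [Hdl Hu]].
  exists (t e0 * dl). split; [nra|].
  intros r1 r2 A1 A2 E1 E2 Hd.
  apply Rnot_le_lt. intro Hc.
  assert (B1 := @bound_adm E Gamma p t r1 (m+1) e0 ltac:(lra) A1 Ht' Ht0 E1).
  assert (B2 := @bound_adm E Gamma p t r2 (m+1) e0 ltac:(lra) A2 Ht' Ht0 E2).
  assert (P1 := proj1 A1 e0). assert (P2 := proj1 A2 e0).
  assert (G := Hu (r1 e0) (r2 e0) ltac:(lra) ltac:(lra) Hc).
  assert (M := @mid_term E Gamma p t r1 r2 m e0 Hp Ht' Hglb A1 A2).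
  nra.
Qed.


Lemma inv_small (n N : nat) : (0 < N)%coq_nat -> (N <= n)%coq_nat -> / INR (S n) < / INR N.
Proof.
  intros H0 H1. apply Rinv_lt_contravar.
  - apply Rmult_lt_0_compat; apply lt_0_INR; lia.
  - apply lt_INR; lia.
Qed.

Lemma inv_le1 (n : nat) : 0 < / INR (S n) <= 1.
Proof.
  assert (1 <= INR (S n)) by (rewrite S_INR; assert (0 <= INR n) by apply pos_INR; lra).
  split; [apply Rinv_0_lt_compat; lra|].
  rewrite <- Rinv_1. apply Rinv_le_contravar; lra.
Qed.

Lemma cv_const (a : R) : Un_cv (fun _ => a) a.
Proof. intros eps He; exists 0%nat; intros n _; rewrite /R_dist Rminus_eq_0 Rabs_R0; lra. Qed.

Lemma exists_min (E : finType) (Gamma : seq E -> Prop) p (s : E -> R) :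
  1 < p -> (forall g, Gamma g -> g <> [::]) -> (forall e, 0 < s e) ->
  exists r, admissible Gamma r /\ energy p s r = Mod Gamma p s.
Proof.
  intros Hp Hg Hs.
  assert (Hs' : forall e, 0 <= s e) by (intro e; left; apply Hs).
  assert (Hglb := Mod_glb p Hg Hs').
  set m := Mod Gamma p s in Hglb |- *.
  assert (Happ : forall n : nat, exists r, admissible Gamma r /\ energy p s r <= m + / INR (S n)).
  { intro n. destruct (glb_approx Hglb (proj1 (inv_le1 n))) as [x [[r [Ar ->]] Hx]].
    exists r; split; auto. }
  set seqr := fun n => proj1_sig (constructive_indefinite_description _ (Happ n)).
  assert (Hsr : forall n, admissible Gamma (seqr n) /\ energy p s (seqr n) <= m + / INR (S n)).
  { intro n. exact (proj2_sig (constructive_indefinite_description _ (Happ n))). }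
  assert (Hcau : forall e, Cauchy_crit (fun n => seqr n e)).
  { intros e eps He.
    destruct (@close_pair E Gamma p s m e eps Hp Hs Hglb He) as [d [Hd Hc]].
    destruct (archimed_cor1 d Hd) as [N [HN HN0]].
    exists N. intros n k Hn Hk. unfold R_dist.
    destruct (Hsr n) as [An En]. destruct (Hsr k) as [Ak Ek].
    assert (I1 := inv_le1 n). assert (I2 := inv_le1 k).
    assert (J1 := inv_small HN0 Hn). assert (J2 := inv_small HN0 Hk).
    apply Hc; auto; lra. }
  set lim := fun e => proj1_sig (Rcomplete.R_complete _ (Hcau e)).
  assert (Hcv : forall e, Un_cv (fun n => seqr n e) (lim e)).
  { intro e. exact (proj2_sig (Rcomplete.R_complete _ (Hcau e))). }
  assert (Alim : admissible Gamma lim).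
  { split.
    - intro e. apply (cv_ge (Hcv e)). intro n. exact (proj1 (proj1 (Hsr n)) e).
    - intros g Hgg. rewrite rho_lenE.
      apply (cv_ge (@lsum_cv _ g seqr lim Hcv)). intro n.
      rewrite -rho_lenE. exact (proj2 (proj1 (Hsr n)) g Hgg). }
  exists lim. split; auto.
  apply Rle_antisym.
  2:{ apply (proj1 Hglb). exists lim; split; auto. }
  assert (Hen : Un_cv (fun n => energy p s (seqr n)) (energy p s lim)).
  { rewrite energyE. 
    apply (@lsum_cv _ (enum E) (fun n e => s e * rpow (Rabs (seqr n e)) p)).
    intro e. apply (CV_mult (fun _ => s e) (fun n => rpow (Rabs (seqr n e)) p)); [apply cv_const|].
    apply (continuity_seq (fun x => rpow (Rabs x) p)); [|apply Hcv].
    apply (continuity_pt_comp Rabs (fun x => rpow x p)); [apply Rcontinuity_abs|apply rpow_cont; lra]. }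
  apply Rnot_lt_le. intro Hlt.
  set eps := (energy p s lim - m)/2.
  destruct (Hen eps ltac:(unfold eps; lra)) as [N1 HN1].
  destruct (archimed_cor1 eps ltac:(unfold eps; lra)) as [N2 [HN2 HN20]].
  set n := Nat.max N1 N2.
  assert (K1 := HN1 n ltac:(unfold n; lia)). unfold R_dist in K1. apply Rabs_def2 in K1.
  assert (K2 := inv_small (n := n) HN20 ltac:(unfold n; lia)).
  assert (K3 := proj2 (Hsr n)).
  unfold eps in *. lra.
Qed.


Lemma Rabs_def2b (a b : R) : Rabs a <= b -> -b <= a <= b.
Proof.
  intro H. assert (H1 := Rle_abs a). assert (H2 := Rle_abs (-a)). rewrite Rabs_Ropp in H2. lra.
Qed.

Lemma extremal_spec (E : finType) (Gamma : seq E -> Prop) p (s : E -> R) :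
  1 < p -> (forall g, Gamma g -> g <> [::]) -> (forall e, 0 < s e) ->
  admissible Gamma (extremal Gamma p s) /\ energy p s (extremal Gamma p s) = Mod Gamma p s.
Proof.
  intros Hp Hg Hs. unfold extremal. apply epsilon_spec. apply exists_min; auto.
Qed.

Lemma closeness (E : finType) (Gamma : seq E -> Prop) p (s rs : E -> R) eps :
  1 < p -> (forall g, Gamma g -> g <> [::]) -> (forall e, 0 < s e) ->
  admissible Gamma rs -> energy p s rs = Mod Gamma p s -> 0 < eps ->
  exists th, 0 < th /\ forall r, admissible Gamma r -> energy p s r <= Mod Gamma p s + th ->
    forall e, Rabs (rpow (Rabs (r e)) p - rpow (rs e) p) < eps.
Proof.
  intros Hp Hg Hs Ars Ers He.
  assert (Hs' : forall e, 0 <= s e) by (intro e; left; apply Hs).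
  assert (Hglb := Mod_glb p Hg Hs').
  set F := Mod Gamma p s in Hglb Ers |- *.
  destruct (@fin_min E (enum E) (fun e d => d <= 1 /\ forall r, admissible Gamma r -> energy p s r <= F + d ->
      Rabs (rpow (Rabs (r e)) p - rpow (rs e) p) < eps)) as [th [Hth Hall]].
  - intros e d d' Hd [Hd1 Hd2]. split; [lra|]. intros r Ar Er. apply Hd2; auto. lra.
  - intro e.
    destruct (rpow_cont p (Rlt_le _ _ Hp) (rs e) eps He) as [al [Hal Hcont]].
    destruct (@close_pair E Gamma p s F e al Hp Hs Hglb Hal) as [d0 [Hd0 Hc]].
    exists (Rmin 1 d0). split; [apply Rmin_pos; lra|]. split; [apply Rmin_l|].
    intros r Ar Er. assert (M1 := Rmin_l 1 d0). assert (M2 := Rmin_r 1 d0).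
    rewrite (Rabs_pos_eq (r e)); [|apply (proj1 Ar)].
    assert (Hcl : Rabs (r e - rs e) < al).
    { apply (Hc r rs Ar Ars); lra. }
    destruct (Req_dec (r e) (rs e)) as [Heq|Hne].
    + rewrite Heq Rminus_eq_0 Rabs_R0; lra.
    + apply (Hcont (r e)). split; [split; [exact I|intro Hq; apply Hne; symmetry; exact Hq]|exact Hcl].
  - exists th. split; auto. intros r Ar Er e.
    apply (proj2 (Hall e (in_In (mem_enum E e)))); auto.
Qed.

Lemma deriv_core (E : finType) (Gamma : seq E -> Prop) p (s eta : E -> R) :
  1 < p -> (forall g, Gamma g -> g <> [::]) -> (forall e, 0 < s e) ->
  forall eps, 0 < eps -> exists al, 0 < al /\ forall h, h <> 0 -> Rabs h < al ->
    Rabs ((Mod Gamma p (fun e => s e + h * eta e) - Mod Gamma p s) / h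
          - lsum (enum E) (fun e => eta e * rpow (extremal Gamma p s e) p)) < eps.
Proof.
  intros Hp Hg Hs eps He.
  assert (Hs' : forall e, 0 <= s e) by (intro e; left; apply Hs).
  assert (Hglb := Mod_glb p Hg Hs').
  destruct (extremal_spec Hp Hg Hs) as [Ars Ers].
  set rs := extremal Gamma p s in Ars Ers |- *.
  set F := Mod Gamma p s in Hglb Ers |- *.
  set D := fun r : E -> R => lsum (enum E) (fun e => eta e * rpow (Rabs (r e)) p).
  assert (HDs : lsum (enum E) (fun e => eta e * rpow (rs e) p) = D rs).
  { apply lsum_ext => e. rewrite Rabs_pos_eq //. apply (proj1 Ars). }
  rewrite HDs.
  set Se := lsum (enum E) (fun e => Rabs (eta e)).
  assert (HSe : 0 <= Se) by (apply lsum_nonneg => e; apply Rabs_pos).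
  set lam := lsum (enum E) (fun e => Rabs (eta e) / s e).
  assert (Hlam : forall e, Rabs (eta e) <= lam * s e).
  { intro e. assert (Rabs (eta e) / s e <= lam).
    { apply (@lsum_term _ (enum E) (fun e => Rabs (eta e) / s e) e); [|by rewrite mem_enum].
      intro x. apply Rmult_le_pos; [apply Rabs_pos|left; apply Rinv_0_lt_compat, Hs]. }
    assert (Hse := Hs e).
    replace (Rabs (eta e)) with (Rabs (eta e) / s e * s e) by (field; lra).
    apply Rmult_le_compat_r; lra. }
  assert (Hlam0 : 0 <= lam).
  { apply lsum_nonneg => e. apply Rmult_le_pos; [apply Rabs_pos|left; apply Rinv_0_lt_compat, Hs]. }
  set eps' := eps / (2 * (Se + 1)).
  assert (Heps' : 0 < eps') by (unfold eps'; apply Rdiv_lt_0_compat; lra).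
  destruct (closeness Hp Hg Hs Ars Ers Heps') as [th [Hth Hclose]].
  assert (HDclose : forall r, admissible Gamma r -> energy p s r <= F + th -> Rabs (D r - D rs) < eps / 2).
  { intros r Ar Er.
    assert (Hc := Hclose r Ar Er).
    assert (Hdiff : D r - D rs = lsum (enum E) (fun e => eta e * (rpow (Rabs (r e)) p - rpow (rs e) p))).
    { unfold D. rewrite -lsum_minus. apply lsum_ext => e.
      rewrite (Rabs_pos_eq (rs e)); [ring|apply (proj1 Ars)]. }
    rewrite Hdiff. eapply Rle_lt_trans; [apply lsum_abs|].
    apply Rle_lt_trans with (lsum (enum E) (fun e => eps' * Rabs (eta e))).
    - apply lsum_le => e. rewrite Rabs_mult.
      assert (Hce := Hc e). assert (0 <= Rabs (eta e)) by apply Rabs_pos. nra.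
    - rewrite lsum_scal. fold Se. unfold eps'.
      replace (eps / (2 * (Se + 1)) * Se) with (eps / 2 * (Se / (Se + 1))) by (field; lra).
      assert (Se / (Se + 1) < 1).
      { apply (Rmult_lt_reg_r (Se + 1)); [lra|]. field_simplify; lra. }
      nra. }
  set A0 := Rabs (D rs).
  assert (HA0 : 0 <= A0) by apply Rabs_pos.
  assert (HF0 : 0 <= F) by (apply (glb_ge0 Hs' Hglb)).
  set C := 2 * (F + A0 + 1).
  set K := A0 + lam * C + 1.
  assert (HK : 1 <= K) by (unfold K, C; nra).
  exists (Rmin (Rmin 1 (/ (2 * lam + 2))) (Rmin (th / K) (eps / 2))).
  split.
  { apply Rmin_pos; apply Rmin_pos; try lra.
    - apply Rinv_0_lt_compat; lra.
    - apply Rdiv_lt_0_compat; lra. }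
  intros h Hh0 Hh.
  assert (Ha1 := Rmin_l (Rmin 1 (/ (2 * lam + 2))) (Rmin (th / K) (eps / 2))).
  assert (Ha2 := Rmin_r (Rmin 1 (/ (2 * lam + 2))) (Rmin (th / K) (eps / 2))).
  assert (Hb1 := Rmin_l 1 (/ (2 * lam + 2))). assert (Hb2 := Rmin_r 1 (/ (2 * lam + 2))).
  assert (Hc1 := Rmin_l (th / K) (eps / 2)). assert (Hc2 := Rmin_r (th / K) (eps / 2)).
  set ah := Rabs h.
  assert (Hah0 : 0 < ah) by (apply Rabs_pos_lt; exact Hh0).
  assert (Hah1 : ah <= 1) by (unfold ah; lra).
  assert (Hahl : ah * lam <= 1/2).
  { assert (ah <= / (2 * lam + 2)) by (unfold ah; lra).
    assert (ah * (2 * lam + 2) <= 1).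
    { apply Rle_trans with (/ (2 * lam + 2) * (2 * lam + 2)); [apply Rmult_le_compat_r; lra|].
      rewrite Rinv_l; lra. }
    nra. }
  assert (Hahk : ah * K <= th).
  { assert (ah <= th / K) by (unfold ah; lra).
    apply Rle_trans with (th / K * K); [apply Rmult_le_compat_r; lra|]. field_simplify; lra. }
  assert (Hahe : ah < eps / 2) by (unfold ah; lra).
  set s' := fun e => s e + h * eta e.
  assert (Hs'' : forall e, 0 <= s' e).
  { intro e. unfold s'. assert (Rabs (h * eta e) <= s e / 2).
    { rewrite Rabs_mult. fold ah. assert (Hl := Hlam e). assert (Hse := Hs e).
      assert (0 <= Rabs (eta e)) by apply Rabs_pos. nra. }
    apply Rabs_def2b in H. assert (Hse := Hs e). lra. }
  assert (Hglb' := Mod_glb p Hg Hs'').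
  fold s'. set F' := Mod Gamma p s' in Hglb' |- *.
  assert (Hup : F' <= F + h * D rs).
  { rewrite -Ers. unfold s'. rewrite -energy_lin. apply (proj1 Hglb'). exists rs; split; auto. }
  assert (Hh2p : 0 < h ^ 2).
  { replace (h^2) with (Rsqr h) by (unfold Rsqr; field). apply Rsqr_pos_lt; exact Hh0. }
  destruct (glb_approx Hglb' Hh2p) as [x [[r [Ar ->]] Hr]].
  unfold s' in Hr. rewrite energy_lin in Hr. fold (D r) in Hr.
  set A := energy p s r in Hr.
  assert (HAF : F <= A) by (apply (proj1 Hglb); exists r; split; auto).
  assert (HB : Rabs (D r) <= lam * A).
  { unfold D. eapply Rle_trans; [apply lsum_abs|].
    unfold A. rewrite energyE -lsum_scal. apply lsum_le => e.
    rewrite Rabs_mult (Rabs_pos_eq (rpow _ _)); [|apply rpow_ge0].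
    assert (Hl := Hlam e). assert (0 <= rpow (Rabs (r e)) p) by apply rpow_ge0. nra. }
  assert (HhD : Rabs (h * D r) <= A / 2).
  { rewrite Rabs_mult. fold ah. assert (0 <= Rabs (D r)) by apply Rabs_pos. nra. }
  assert (HhDs : Rabs (h * D rs) <= A0).
  { rewrite Rabs_mult. fold ah A0. nra. }
  apply Rabs_def2b in HhD. apply Rabs_def2b in HhDs.
  assert (Hh2 : h ^ 2 <= ah).
  { replace (h ^ 2) with (ah * ah) by (unfold ah; rewrite -Rabs_mult; simpl;
      rewrite Rmult_1_r Rabs_pos_eq; [reflexivity| nra]). nra. }
  assert (HAC : A <= C) by (unfold C; lra).
  assert (HAF2 : A - F <= th).
  { assert (HhD2 : Rabs (h * D r) <= ah * lam * C).
    { rewrite Rabs_mult. fold ah. assert (0 <= Rabs (D r)) by apply Rabs_pos.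
      assert (lam * A <= lam * C) by nra. nra. }
    assert (HhDs2 : Rabs (h * D rs) <= ah * A0) by (rewrite Rabs_mult; fold ah A0; lra).
    apply Rabs_def2b in HhD2. apply Rabs_def2b in HhDs2.
    unfold K in Hahk. nra. }
  assert (Hcl : Rabs (D r - D rs) < eps / 2) by (apply HDclose; [exact Ar| change (A <= F + th); lra]).
  assert (Hlow : h * D r - h ^ 2 <= F' - F) by lra.
  assert (Hdiff : Rabs (F' - F - h * D rs) <= ah * Rabs (D r - D rs) + ah * ah).
  { assert (Hq1 : Rabs (h * (D r - D rs)) = ah * Rabs (D r - D rs)) by (rewrite Rabs_mult; reflexivity).
    assert (Hq2 : h ^ 2 = ah * ah) by (unfold ah; rewrite -Rabs_mult; simpl;
      rewrite Rmult_1_r Rabs_pos_eq; [reflexivity| nra]).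
    assert (Hx := Rabs_def2b (Req_le _ _ Hq1)).
    apply Rabs_le. split; nra. }
  replace ((F' - F) / h - D rs) with ((F' - F - h * D rs) / h) by (field; exact Hh0).
  unfold Rdiv. rewrite Rabs_mult Rabs_inv. fold ah.
  apply (Rmult_lt_reg_r ah); [lra|].
  rewrite Rmult_assoc Rinv_l; [|lra]. rewrite Rmult_1_r.
  nra.
Qed.

Unset Implicit Arguments. Set Strict Implicit.

Theorem mainTheorem14
  (V E : finType) (trav : E -> V -> V -> bool)
  (Gamma : seq E -> Prop)
  (HGwalks : forall g, Gamma g -> is_walk trav g)
  (HGne : exists g, Gamma g)
  (p : R) (Hp : 1 < p)
  (sigma : E -> R) (Hsigma : forall e, 0 < sigma e) :
  (forall eta : E -> R,
     limit1_in
       (fun h => (Mod Gamma p (fun e => sigma e + h * eta e) - Mod Gamma p sigma) / h)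
       (fun h => 0 < h)
       (sumE (fun e => eta e * rpow (extremal Gamma p sigma e) p))
       0) /\
  (forall e0 : E,
     limit1_in
       (fun h => (Mod Gamma p (fun e => if e == e0 then sigma e + h else sigma e)
                  - Mod Gamma p sigma) / h)
       (fun h => h <> 0)
       (rpow (extremal Gamma p sigma e0) p)
       0).
Proof.
  assert (Hg : forall g, Gamma g -> g <> [::]) by (intros g Hgg; exact (proj1 (HGwalks g Hgg))).
  split.
  - intros eta eps He.
    destruct (deriv_core eta Hp Hg Hsigma He) as [al [Hal Hc]].
    exists al. split; [lra|]. intros h [Hpos Hd]. simpl in Hd |- *. unfold R_dist in Hd |- *.
    rewrite Rminus_0_r in Hd. apply Hc; [lra|exact Hd].
  - intros e0 eps He.
    set eta := fun e : E => if e == e0 then 1 else 0.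
    destruct (deriv_core eta Hp Hg Hsigma He) as [al [Hal Hc]].
    exists al. split; [lra|]. intros h [Hpos Hd]. simpl in Hd |- *. unfold R_dist in Hd |- *.
    rewrite Rminus_0_r in Hd.
    assert (Hf : (fun e => if e == e0 then sigma e + h else sigma e) = (fun e => sigma e + h * eta e)).
    { apply functional_extensionality => e. unfold eta. case: (e == e0); lra. }
    assert (Hl : rpow (extremal Gamma p sigma e0) p
                 = lsum (enum E) (fun e => eta e * rpow (extremal Gamma p sigma e) p)).
    { unfold eta. rewrite lsum_ind; [|apply enum_uniq]. by rewrite mem_enum. }
    rewrite Hf Hl. apply Hc; [exact Hpos|exact Hd].
Qed.
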